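(* Let $H\subseteq\ell^2$ be the Hilbert cube of real sequences $x$ with $x_k\in[0,\tfrac1k]$ for all $k\in\mathbb{N}$, with the $\ell^2$ metric. Define $x=0$, $y=\tfrac12e_1+\sum_{k=2}^\infty\tfrac1k e_k$, and $z=e_1$. Then $\{x,y,z\}$ is an optimal code of size $3$ in $H$ and is unique up to isometry.
   Context: An optimal code of size $n$ is an $n$-element subset of $H$ maximizing the minimum distance between distinct points; unique up to isometry means every optimal code of size $3$ is the image of $\{x,y,z\}$ under an isometry of $H$ onto itself. $e_k$ is the $k$th standard basis vector. *)

(* Defs.v *)
From Stdlib Require Import Reals Lra List.
From Coquelicot Require Import Coquelicot.
Import ListNotations.
Open Scope R_scope.

(* Real sequences. Index convention: the paper's coordinate k (k >= 1) is
   stored at index k-1, i.e. coordinate i : nat corresponds to k = i+1. *)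
Definition seqR := nat -> R.

Definition inH (x : seqR) : Prop :=
  forall i : nat, 0 <= x i <= / INR (S i).

Definition l2dist (x y : seqR) : R :=
  sqrt (Series (fun i => (x i - y i) ^ 2)).

Definition is_code (n : nat) (C : list seqR) : Prop :=
  NoDup C /\ length C = n /\ (forall p, In p C -> inH p).

Definition mindist_ge (C : list seqR) (r : R) : Prop :=
  forall p q, In p C -> In q C -> p <> q -> r <= l2dist p q.

Definition optimal_code (n : nat) (C : list seqR) : Prop :=
  is_code n C /\
  forall C', is_code n C' -> forall r, mindist_ge C' r -> mindist_ge C r.

Definition isometry_onto_H (f : seqR -> seqR) : Prop :=
  (forall p, inH p -> inH (f p)) /\
  (forall p q, inH p -> inH q -> l2dist (f p) (f q) = l2dist p q) /\
  (forall q, inH q -> exists p, inH p /\ f p = q).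

Definition ptx : seqR := fun _ => 0.
Definition pty : seqR := fun i => match i with O => / 2 | _ => / INR (S i) end.
Definition ptz : seqR := fun i => match i with O => 1 | _ => 0 end.

(* Main.v *)
Require Import Defs.
From Stdlib Require Import Reals List Lra Psatz FunctionalExtensionality.
From Coquelicot Require Import Coquelicot.
Import ListNotations.
Open Scope R_scope.

Definition bb (i:nat) : R := / INR (S i).
Definition g (i:nat) : R := (bb i)^2.
Definition T : R := Series (fun k => g (S k)).

Lemma bb_pos i : 0 < bb i.
Proof. unfold bb. apply Rinv_0_lt_compat, lt_0_INR; lia. Qed.

Lemma bb0 : bb 0 = 1.
Proof. unfold bb. simpl. apply Rinv_1. Qed.

Lemma INR_S2 k : INR (S (S k)) = INR k + 2.
Proof. rewrite !S_INR. ring. Qed.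

Lemma tele (m:nat) : is_series (fun k => / INR (k + m + 1) - / INR (k + m + 2)) (/ INR (m+1)).
Proof.
  assert (Hs : forall N, sum_n (fun k => / INR (k + m + 1) - / INR (k + m + 2)) N
                         = / INR (m+1) - / INR (N + m + 2)).
  { intro N. rewrite sum_n_Reals. induction N as [|N IH].
    - simpl. reflexivity.
    - cbn [sum_f_R0]. rewrite IH.
      replace (S N + m + 1)%nat with (N + m + 2)%nat by lia.
      lra. }
  unfold is_series.
  assert (H : is_lim_seq (fun N => / INR (m+1) - / INR (N + m + 2)) (/ INR (m+1) - 0)).
  { apply is_lim_seq_minus'. apply is_lim_seq_const.
    replace (Finite 0) with (Rbar_inv p_infty) by reflexivity.
    apply is_lim_seq_inv; [|discriminate].
    assert (H1 := proj1 (is_lim_seq_incr_n INR (m+2) p_infty) is_lim_seq_INR).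
    eapply is_lim_seq_ext; [|exact H1]. intro n. simpl. f_equal. lia.
    }
  rewrite Rminus_0_r in H.
  eapply is_lim_seq_ext in H. exact H.
  intro N. simpl. rewrite Hs. reflexivity.
Qed.

Lemma tel_real x : 0 <= x -> (/ (x+2))^2 <= /(x+1) - /(x+2).
Proof.
  intro H.
  replace (/ (x + 1) - / (x + 2)) with (/ ((x + 1) * (x + 2))) by (field; lra).
  rewrite <- Rinv_pow by lra. apply Rinv_le_contravar; nra.
Qed.

Lemma INR_eq_helper k c : INR (k + c) = INR k + INR c.
Proof. apply plus_INR. Qed.

Lemma sq_le_tele k : g (S k) <= / INR (k + 0 + 1) - / INR (k + 0 + 2).
Proof.
  unfold g, bb.
  replace (INR (S (S k))) with (INR k + 2) by (rewrite !S_INR; ring).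
  replace (INR (k+0+1)) with (INR k + 1) by (rewrite !plus_INR; simpl; ring).
  replace (INR (k+0+2)) with (INR k + 2) by (rewrite !plus_INR; simpl; ring).
  apply tel_real, pos_INR.
Qed.

Lemma sq_le_tele1 k : g (S (S k)) <= / INR (k + 1 + 1) - / INR (k + 1 + 2).
Proof.
  unfold g, bb.
  replace (INR (S (S (S k)))) with ((INR k + 1) + 2) by (rewrite !S_INR; ring).
  replace (INR (k+1+1)) with ((INR k + 1) + 1) by (rewrite !plus_INR; simpl; ring).
  replace (INR (k+1+2)) with ((INR k + 1) + 2) by (rewrite !plus_INR; simpl; ring).
  apply tel_real. generalize (pos_INR k); lra.
Qed.

Lemma g_nonneg i : 0 <= g i.
Proof. unfold g. apply pow2_ge_0. Qed.

Lemma normR x : norm x = Rabs x.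
Proof. reflexivity. Qed.

Lemma ex_gS : ex_series (fun k => g (S k)).
Proof.
  apply (@ex_series_le R_AbsRing R_CompleteNormedModule _ (fun k => / INR (k + 0 + 1) - / INR (k + 0 + 2))).
  - intro k. rewrite normR, Rabs_pos_eq by apply g_nonneg. apply sq_le_tele.
  - eexists. apply tele.
Qed.

Lemma ex_g : ex_series g.
Proof. apply ex_series_incr_1. apply ex_gS. Qed.

Lemma Series_zero : Series (fun _ => 0) = 0.
Proof.
  rewrite (Series_ext _ (fun n => 0 * g n)) by (intro; ring).
  rewrite Series_scal_l. ring.
Qed.

Lemma Series_ge0 a : (forall n, 0 <= a n) -> ex_series a -> 0 <= Series a.
Proof.
  intros H E. rewrite <- Series_zero. apply Series_le; auto. intro; split; [lra|auto].
Qed.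

Lemma term_le_Series a n : (forall n, 0 <= a n) -> ex_series a -> a n <= Series a.
Proof.
  intros H E. rewrite (Series_incr_n a (S n)) by (lia || auto). simpl pred.
  assert (0 <= Series (fun k => a (S n + k)%nat)).
  { apply Series_ge0. intro; auto. apply (ex_series_incr_n a (S n)). auto. }
  assert (a n <= sum_f_R0 a n).
  { destruct n. simpl. lra. cbn [sum_f_R0]. generalize (cond_pos_sum a n H). lra. }
  lra.
Qed.

Definition D (p q : seqR) : R := Series (fun i => (p i - q i)^2).

Lemma l2D p q : l2dist p q = sqrt (D p q).
Proof. reflexivity. Qed.

Lemma D_sym p q : D p q = D q p.
Proof. unfold D. apply Series_ext. intro. ring. Qed.

Lemma pt_le_g p q i : inH p -> inH q -> 0 <= (p i - q i)^2 <= g i.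
Proof.
  intros Hp Hq. specialize (Hp i). specialize (Hq i). unfold g, bb. split.
  apply pow2_ge_0. nra.
Qed.

Lemma ex_d p q : inH p -> inH q -> ex_series (fun i => (p i - q i)^2).
Proof.
  intros Hp Hq.
  apply (@ex_series_le R_AbsRing R_CompleteNormedModule _ g).
  - intro k. rewrite normR, Rabs_pos_eq by apply pow2_ge_0. apply pt_le_g; auto.
  - apply ex_g.
Qed.

Definition U (p q : seqR) : R := Series (fun k => (p (S k) - q (S k))^2).

Lemma ex_U p q : inH p -> inH q -> ex_series (fun k => (p (S k) - q (S k))^2).
Proof. intros. apply (ex_series_incr_1 (fun i => (p i - q i)^2)). apply ex_d; auto. Qed.

Lemma D_split p q : inH p -> inH q -> D p q = (p 0%nat - q 0%nat)^2 + U p q.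
Proof. intros. unfold D, U. rewrite Series_incr_1. reflexivity. apply ex_d; auto. Qed.

Lemma U_le p q : inH p -> inH q -> U p q <= T.
Proof.
  intros. unfold U, T. apply Series_le. intro n. apply pt_le_g; auto. apply ex_gS.
Qed.

Lemma D_ge0 p q : inH p -> inH q -> 0 <= D p q.
Proof. intros. apply Series_ge0. intro; apply pow2_ge_0. apply ex_d; auto. Qed.

Lemma T_le : T <= 3/4.
Proof.
  unfold T. rewrite Series_incr_1 by apply ex_gS.
  assert (Series (fun k => g (S (S k))) <= / INR (1+1)).
  { rewrite <- (is_series_unique _ _ (tele 1)). apply Series_le.
    intro n. split. apply g_nonneg. apply sq_le_tele1. eexists; apply tele. }
  assert (g 1 = /4). { unfold g, bb. simpl. field. }
  replace (INR (1+1)) with 2 in H by (simpl; ring). lra.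
Qed.

Lemma T_ge0 : 0 <= T.
Proof. apply Series_ge0. intro; apply g_nonneg. apply ex_gS. Qed.

Definition cc : R := /4 + T.

Lemma inH0 p : inH p -> 0 <= p 0%nat <= 1.
Proof. intro H. specialize (H 0%nat). simpl in H. rewrite Rinv_1 in H. exact H. Qed.

Lemma key_sorted p q s : inH p -> inH q -> inH s ->
  p 0%nat <= q 0%nat <= s 0%nat -> D p q <= cc \/ D q s <= cc.
Proof.
  intros Hp Hq Hs Ho. apply inH0 in Hp as P0. apply inH0 in Hs as S0.
  rewrite (D_split p q), (D_split q s) by auto.
  generalize (U_le p q Hp Hq) (U_le q s Hq Hs). unfold cc. intros.
  destruct (Rle_dec (q 0%nat - p 0%nat) (1/2)).
  - left. nra.
  - right. nra.
Qed.

Ltac closeD H := first [left; exact H | right; left; exact H | right; right; exact H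
  | left; rewrite D_sym; exact H | right; left; rewrite D_sym; exact H
  | right; right; rewrite D_sym; exact H].

Lemma key3 p q s : inH p -> inH q -> inH s ->
  D p q <= cc \/ D q s <= cc \/ D p s <= cc.
Proof.
  intros Hp Hq Hs.
  destruct (Rle_dec (p 0%nat) (q 0%nat)), (Rle_dec (q 0%nat) (s 0%nat)), (Rle_dec (p 0%nat) (s 0%nat)).
  - destruct (key_sorted p q s) as [H|H]; auto; try lra; closeD H.
  - destruct (key_sorted p q s) as [H|H]; auto; try lra; closeD H.
  - destruct (key_sorted p s q) as [H|H]; auto; try lra; closeD H.
  - destruct (key_sorted s p q) as [H|H]; auto; try lra; closeD H.
  - destruct (key_sorted q p s) as [H|H]; auto; try lra; closeD H.
  - destruct (key_sorted q s p) as [H|H]; auto; try lra; closeD H.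
  - destruct (key_sorted s q p) as [H|H]; auto; try lra; closeD H.
  - destruct (key_sorted s q p) as [H|H]; auto; try lra; closeD H.
Qed.

Lemma inH_x : inH ptx.
Proof. intro i. unfold ptx. split. lra. left. apply Rinv_0_lt_compat, lt_0_INR; lia. Qed.

Lemma inH_y : inH pty.
Proof.
  intro i. destruct i; unfold pty.
  - simpl. rewrite Rinv_1. lra.
  - split; [|lra]. left. apply Rinv_0_lt_compat, lt_0_INR; lia.
Qed.

Lemma inH_z : inH ptz.
Proof.
  intro i. destruct i; unfold ptz.
  - simpl. rewrite Rinv_1. lra.
  - split; [lra|]. left. apply Rinv_0_lt_compat, lt_0_INR; lia.
Qed.

Lemma D_xy : D ptx pty = cc.
Proof.
  rewrite D_split by (apply inH_x || apply inH_y). unfold cc, U, T. f_equal.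
  - unfold ptx, pty. field.
  - apply Series_ext. intro k. unfold ptx, pty, g, bb. ring.
Qed.

Lemma D_yz : D pty ptz = cc.
Proof.
  rewrite D_split by (apply inH_z || apply inH_y). unfold cc, U, T. f_equal.
  - unfold ptz, pty. field.
  - apply Series_ext. intro k. unfold ptz, pty, g, bb. ring.
Qed.

Lemma D_xz : D ptx ptz = 1.
Proof.
  rewrite D_split by (apply inH_z || apply inH_x). unfold U.
  rewrite (Series_ext _ (fun _ => 0)) by (intro; unfold ptx, ptz; ring).
  rewrite Series_zero. unfold ptx, ptz. ring.
Qed.

Lemma cc_le1 : cc <= 1.
Proof. unfold cc. generalize T_le. lra. Qed.
Lemma cc_ge0 : 0 <= cc.
Proof. unfold cc. generalize T_ge0. lra. Qed.

Lemma ours_mind : mindist_ge [ptx; pty; ptz] (sqrt cc).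
Proof.
  intros p q Hp Hq Hne. rewrite l2D. apply sqrt_le_1_alt.
  generalize cc_le1; intro.
  simpl in Hp, Hq.
  destruct Hp as [<-|[<-|[<-|[]]]]; destruct Hq as [<-|[<-|[<-|[]]]];
    try (exfalso; apply Hne; reflexivity);
    rewrite ?D_xy, ?D_yz, ?D_xz; try lra;
    rewrite D_sym, ?D_xy, ?D_yz, ?D_xz; lra.
Qed.

Lemma ours_code : is_code 3 [ptx; pty; ptz].
Proof.
  split; [|split; [reflexivity|]].
  - assert (ptx <> pty). { intro E. assert (E0 := f_equal (fun f => f 0%nat) E). unfold ptx, pty in E0. simpl in E0. lra. }
    assert (ptx <> ptz). { intro E. assert (E0 := f_equal (fun f => f 0%nat) E). unfold ptx, ptz in E0. simpl in E0. lra. }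
    assert (pty <> ptz). { intro E. assert (E0 := f_equal (fun f => f 0%nat) E). unfold ptz, pty in E0. simpl in E0. lra. }
    constructor. simpl. intuition.
    constructor. simpl. intuition.
    constructor. simpl; auto. constructor.
  - intros p Hp. simpl in Hp. destruct Hp as [<-|[<-|[<-|[]]]].
    apply inH_x. apply inH_y. apply inH_z.
Qed.

Definition refl (p w : seqR) : seqR := fun i =>
  match i with
  | O => w O
  | S k => if Req_EM_T (p (S k)) 0 then w (S k) else bb (S k) - w (S k)
  end.

Lemma refl_inH p w : inH w -> inH (refl p w).
Proof.
  intros H i. destruct i; unfold refl.
  - apply H.
  - destruct Req_EM_T. apply H. specialize (H (S i)). unfold bb. lra.
Qed.

Lemma refl_invol p w : refl p (refl p w) = w.
Proof.
  apply functional_extensionality. intro i. destruct i; unfold refl. reflexivity.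
  destruct Req_EM_T; lra.
Qed.

Lemma refl_iso p : isometry_onto_H (refl p).
Proof.
  split; [|split].
  - apply refl_inH.
  - intros a c _ _. unfold l2dist. f_equal. apply Series_ext. intro i.
    destruct i; unfold refl. reflexivity. destruct Req_EM_T. reflexivity.
    replace (bb (S i) - a (S i) - (bb (S i) - c (S i))) with (- (a (S i) - c (S i))) by lra.
    rewrite <- Rsqr_pow2, <- Rsqr_neg. apply Rsqr_pow2.
  - intros q Hq. exists (refl p q). split. apply refl_inH; auto. apply refl_invol.
Qed.

Lemma U_eq_terms p q : inH p -> inH q -> T <= U p q ->
  forall k, (p (S k) - q (S k))^2 = g (S k).
Proof.
  intros Hp Hq HU k.
  assert (HU' := U_le p q Hp Hq).
  set (a := fun k => g (S k) - (p (S k) - q (S k))^2).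
  assert (Ea : ex_series a).
  { apply (@ex_series_minus R_AbsRing R_NormedModule). apply ex_gS. apply ex_U; auto. }
  assert (Sa : Series a = 0).
  { unfold a. rewrite Series_minus. fold T. fold (U p q). lra. apply ex_gS. apply ex_U; auto. }
  assert (Ha : forall n, 0 <= a n).
  { intro n. unfold a. generalize (pt_le_g p q (S n) Hp Hq). lra. }
  assert (H1 := term_le_Series a k Ha Ea). rewrite Sa in H1.
  specialize (Ha k). unfold a in *. lra.
Qed.

Lemma endpoint P Q b : 0 <= P <= b -> 0 <= Q <= b -> (P - Q)^2 = b^2 ->
  (P = 0 /\ Q = b) \/ (P = b /\ Q = 0).
Proof.
  intros HP HQ E.
  assert ((P - Q - b) * (P - Q + b) = 0) by nra.
  apply Rmult_integral in H. destruct H; [right|left]; lra.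
Qed.

Lemma unique_sorted p q s : inH p -> inH q -> inH s ->
  p 0%nat <= q 0%nat <= s 0%nat -> cc <= D p q -> cc <= D q s ->
  refl p ptx = p /\ refl p pty = q /\ refl p ptz = s.
Proof.
  intros Hp Hq Hs Ho H1 H2.
  apply inH0 in Hp as P0. apply inH0 in Hs as S0.
  rewrite (D_split p q) in H1 by auto. rewrite (D_split q s) in H2 by auto.
  generalize (U_le p q Hp Hq) (U_le q s Hq Hs). unfold cc in *. intros Ua Ub.
  assert (A1 : q 0%nat - p 0%nat >= 1/2) by nra.
  assert (A2 : s 0%nat - q 0%nat >= 1/2) by nra.
  assert (Ep : p 0%nat = 0) by lra. assert (Eq : q 0%nat = /2) by lra.
  assert (Es : s 0%nat = 1) by lra.
  assert (T1 : forall k, (p (S k) - q (S k))^2 = g (S k)).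
  { apply U_eq_terms; auto. nra. }
  assert (T2 : forall k, (q (S k) - s (S k))^2 = g (S k)).
  { apply U_eq_terms; auto. nra. }
  assert (W : forall k, (p (S k) = 0 /\ q (S k) = bb (S k) /\ s (S k) = 0) \/
                        (p (S k) = bb (S k) /\ q (S k) = 0 /\ s (S k) = bb (S k))).
  { intro k. destruct (endpoint (p (S k)) (q (S k)) (bb (S k))) as [[]|[]];
      try apply Hp; try apply Hq; try apply T1;
    destruct (endpoint (q (S k)) (s (S k)) (bb (S k))) as [[]|[]];
      try apply Hs; try apply Hq; try apply T2; lra. }
  split; [|split]; apply functional_extensionality; intro i; destruct i as [|i]; unfold refl.
  - unfold ptx. lra.
  - destruct Req_EM_T; unfold ptx; destruct (W i) as [[? [? ?]]|[? [? ?]]]; lra.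
  - unfold pty. lra.
  - destruct Req_EM_T; unfold pty; fold (bb (S i)); destruct (W i) as [[? [? ?]]|[? [? ?]]]; try lra.
  - unfold ptz. lra.
  - destruct Req_EM_T; unfold ptz; destruct (W i) as [[? [? ?]]|[? [? ?]]]; try lra.
Qed.

Lemma final_perm a b e : inH a -> inH b -> inH e ->
  cc <= D a b -> cc <= D b e -> cc <= D a e ->
  exists f, isometry_onto_H f /\
    forall q, (a = q \/ b = q \/ e = q \/ False) <-> (q = f ptx \/ q = f pty \/ q = f ptz).
Proof.
  intros Ha Hb He Hab Hbe Hae.
  assert (Hba : cc <= D b a) by (rewrite D_sym; auto).
  assert (Heb : cc <= D e b) by (rewrite D_sym; auto).
  assert (Hea : cc <= D e a) by (rewrite D_sym; auto).
  destruct (Rle_dec (a 0%nat) (b 0%nat)), (Rle_dec (b 0%nat) (e 0%nat)), (Rle_dec (a 0%nat) (e 0%nat)).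
  all: first
    [ destruct (unique_sorted a b e ltac:(auto) ltac:(auto) ltac:(auto) ltac:(split; lra) ltac:(auto) ltac:(auto)) as [X [Y Z]]
    | destruct (unique_sorted a e b ltac:(auto) ltac:(auto) ltac:(auto) ltac:(split; lra) ltac:(auto) ltac:(auto)) as [X [Y Z]]
    | destruct (unique_sorted b a e ltac:(auto) ltac:(auto) ltac:(auto) ltac:(split; lra) ltac:(auto) ltac:(auto)) as [X [Y Z]]
    | destruct (unique_sorted b e a ltac:(auto) ltac:(auto) ltac:(auto) ltac:(split; lra) ltac:(auto) ltac:(auto)) as [X [Y Z]]
    | destruct (unique_sorted e a b ltac:(auto) ltac:(auto) ltac:(auto) ltac:(split; lra) ltac:(auto) ltac:(auto)) as [X [Y Z]]
    | destruct (unique_sorted e b a ltac:(auto) ltac:(auto) ltac:(auto) ltac:(split; lra) ltac:(auto) ltac:(auto)) as [X [Y Z]] ].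
  all: eexists; split; [apply refl_iso|]; rewrite X, Y, Z; intro q; split; intro H;
       repeat destruct H as [H|H]; subst; tauto.
Qed.

Theorem lemma4p20 :
  optimal_code 3 [ptx; pty; ptz] /\
  (forall C : list seqR, optimal_code 3 C ->
     exists f : seqR -> seqR, isometry_onto_H f /\
       (forall q, In q C <-> (q = f ptx \/ q = f pty \/ q = f ptz))).
Proof.
  split.
  - split; [apply ours_code|]. intros C' [Hnd [Hlen Hin]] r Hr.
    destruct C' as [|a [|b [|e [|]]]]; try discriminate.
    assert (Ha : inH a) by (apply Hin; simpl; auto).
    assert (Hb : inH b) by (apply Hin; simpl; auto).
    assert (He : inH e) by (apply Hin; simpl; auto).
    inversion Hnd as [|? ? Hn1 Hnd1]; subst. inversion Hnd1 as [|? ? Hn2 Hnd2]; subst.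
    simpl in Hn1, Hn2.
    assert (Hrc : r <= sqrt cc).
    { destruct (key3 a b e Ha Hb He) as [H|[H|H]].
      - eapply Rle_trans. apply (Hr a b); [simpl; auto | simpl; auto | intro; subst; tauto].
        rewrite l2D. apply sqrt_le_1_alt. exact H.
      - eapply Rle_trans. apply (Hr b e); [simpl; auto | simpl; auto | intro; subst; tauto].
        rewrite l2D. apply sqrt_le_1_alt. exact H.
      - eapply Rle_trans. apply (Hr a e); [simpl; auto | simpl; auto | intro; subst; tauto].
        rewrite l2D. apply sqrt_le_1_alt. exact H. }
    intros p q Hp Hq Hne. eapply Rle_trans. exact Hrc. apply ours_mind; auto.
  - intros C [[Hnd [Hlen Hin]] Hopt].
    assert (Hm := Hopt _ ours_code _ ours_mind).
    destruct C as [|a [|b [|e [|]]]]; try discriminate.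
    assert (Ha : inH a) by (apply Hin; simpl; auto).
    assert (Hb : inH b) by (apply Hin; simpl; auto).
    assert (He : inH e) by (apply Hin; simpl; auto).
    inversion Hnd as [|? ? Hn1 Hnd1]; subst. inversion Hnd1 as [|? ? Hn2 Hnd2]; subst.
    simpl in Hn1, Hn2.
    assert (G : forall p q, inH p -> inH q -> sqrt cc <= l2dist p q -> cc <= D p q).
    { intros p q Hp Hq H. rewrite l2D in H. apply sqrt_le_0; auto.
      apply cc_ge0. apply D_ge0; auto. }
    destruct (final_perm a b e) as [f [Hf Hq]]; auto.
    + apply G; auto. apply Hm; [simpl; auto | simpl; auto | intro; subst; tauto].
    + apply G; auto. apply Hm; [simpl; auto | simpl; auto | intro; subst; tauto].
    + apply G; auto. apply Hm; [simpl; auto | simpl; auto | intro; subst; tauto].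
    + exists f. split; auto.
Qed.
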